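(* Let $d_\mu,d_\lambda\ge 2$ be integers with $d_\mu<d_\lambda$, and let $a\in(0,1)$. Let $|\mu\rangle,|\bar\mu\rangle\in\mathbb{C}^{d_\mu}\otimes\mathbb{C}^{d_\mu}$ and $|\lambda\rangle,|\bar\lambda\rangle\in\mathbb{C}^{d_\lambda}\otimes\mathbb{C}^{d_\lambda}$ be states whose squared Schmidt coefficients are the normalizations of the following tuples: $$\mu\propto(1,a^{d_\lambda},a^{2d_\lambda},\dots,a^{(d_\mu-1)d_\lambda}),\quad \lambda\propto(1,a,a^2,\dots,a^{d_\lambda-1}),$$ $$\bar\mu\propto(1,a,a^2,\dots,a^{d_\mu-1}),\quad \bar\lambda\propto(1,a^{d_\mu},a^{2d_\mu},\dots,a^{(d_\lambda-1)d_\mu}).$$ Then $|\mu\rangle\otimes|\lambda\rangle$ can be transformed into $|\bar\mu\rangle\otimes|\bar\lambda\rangle$ by a local unitary, and this transformation is non-trivial: $|\bar\mu\rangle$ is not equal to $|\mu\rangle$ up to local unitaries.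
   Context: The state $|\mu\rangle\otimes|\lambda\rangle$ is regarded as a bipartite state between two parties, each holding a $d_\mu$-dimensional and a $d_\lambda$-dimensional subsystem. A local unitary is $U_A\otimes U_B$ with $U_A,U_B\in\mathrm{U}(d_\mu d_\lambda)$. *)

(* Defs.v *)
From HB Require Import structures.
From mathcomp Require Import all_boot all_order all_algebra.
From mathcomp Require Import reals.
From mathcomp Require Import complex mxtens.
Set Implicit Arguments. Unset Strict Implicit. Unset Printing Implicit Defensive.
Import Order.TTheory GRing.Theory Num.Theory.
Local Open Scope ring_scope.

Definition adjmx (R : rcfType) m n (A : 'M[R[i]]_(m, n)) : 'M[R[i]]_(n, m) :=
  \matrix_(i, j) (A j i)^*.

Definition unitary (R : rcfType) n (A : 'M[R[i]]_n) : Prop :=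
  A *m adjmx A = 1%:M /\ adjmx A *m A = 1%:M.

(* Convention: a pure state |psi> = sum_{i,j} M i j |i>_A |j>_B of C^m (x) C^n
   is represented by its coefficient matrix M : 'M_(m, n). *)

(* Action of the local unitary UA (x) UB on a bipartite state with
   coefficient matrix M:  (UA (x) UB)|psi>  has coefficient matrix
   UA M UB^T. *)
Definition lu_apply (R : rcfType) m n (UA : 'M[R[i]]_m) (UB : 'M[R[i]]_n)
  (M : 'M[R[i]]_(m, n)) : 'M[R[i]]_(m, n) := UA *m M *m UB^T.

Definition lu_transformable (R : rcfType) m n (M N : 'M[R[i]]_(m, n)) : Prop :=
  exists (UA : 'M[R[i]]_m) (UB : 'M[R[i]]_n),
    unitary UA /\ unitary UB /\ lu_apply UA UB M = N.

(* The state of C^d (x) C^d with coefficient matrix M has a Schmidt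
   decomposition |psi> = sum_k sqrt(p k) |u_k>|v_k> with orthonormal
   bases (u_k) (columns of U) and (v_k) (columns of V); i.e. its squared
   Schmidt coefficients are (p k)_k. *)
Definition has_sq_schmidt (R : rcfType) d (M : 'M[R[i]]_d) (p : 'I_d -> R) : Prop :=
  exists (U V : 'M[R[i]]_d), unitary U /\ unitary V /\
    M = \sum_(k < d) (Num.sqrt (p k))%:C%C *: (col k U *m (col k V)^T).

Definition normalize (R : rcfType) d (w : 'I_d -> R) : 'I_d -> R :=
  fun k => w k / \sum_(j < d) w j.

Definition geom (R : rcfType) d (b : R) : 'I_d -> R := fun k => b ^+ k.

(* Kronecker product of coefficient matrices: the coefficient matrix of
   |psi> (x) |phi> regarded as a bipartite state between A = A1 A2 and
   B = B1 B2. *)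
Notation "A *t B" := (tensmx A B) (at level 40, left associativity).
Arguments geom {R} d b.

(* Main.v *)
Require Import Defs.
From HB Require Import structures.
From mathcomp Require Import all_boot all_order all_algebra.
From mathcomp Require Import reals.
From mathcomp Require Import complex mxtens zify.
From mathcomp Require Import fingroup perm lra.
Import Order.TTheory GRing.Theory Num.Theory.
Local Open Scope ring_scope.
Set Implicit Arguments. Unset Strict Implicit. Unset Printing Implicit Defensive.

Section Aux.
Variable R : rcfType.
Local Notation C := R[i].

Lemma adjmx_mul m n p (A : 'M[C]_(m, n)) (B : 'M[C]_(n, p)) :
  adjmx (A *m B) = adjmx B *m adjmx A.
Proof.
apply/matrixP=> i j; rewrite !mxE rmorph_sum; apply: eq_bigr=> k _.
by rewrite !mxE rmorphM mulrC.
Qed.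

Lemma adjmx_tr m n (A : 'M[C]_(m, n)) : adjmx (A^T) = (adjmx A)^T.
Proof. by apply/matrixP=> i j; rewrite !mxE. Qed.

Lemma adjmx1 n : adjmx (1%:M : 'M[C]_n) = 1%:M.
Proof. by apply/matrixP=> i j; rewrite !mxE eq_sym rmorph_nat. Qed.

Lemma adjmxK m n (A : 'M[C]_(m, n)) : adjmx (adjmx A) = A.
Proof. by apply/matrixP=> i j; rewrite !mxE conjCK. Qed.

Lemma unitary_mul n (A B : 'M[C]_n) : unitary A -> unitary B -> unitary (A *m B).
Proof.
move=> [A1 A2] [B1 B2]; rewrite /unitary adjmx_mul; split.
  by rewrite mulmxA -(mulmxA A) B1 mulmx1 A1.
by rewrite mulmxA -(mulmxA _ _ A) A2 mulmx1 B2.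
Qed.

Lemma unitary_adj n (A : 'M[C]_n) : unitary A -> unitary (adjmx A).
Proof. by move=> [A1 A2]; rewrite /unitary adjmxK. Qed.

Lemma unitary_trT n (B : 'M[C]_n) : unitary B -> B^T *m (adjmx B)^T = 1%:M.
Proof. by move=> [_ B2]; rewrite -trmx_mul B2 trmx1. Qed.

Definition dg d (p : 'I_d -> R) : 'M[C]_d :=
  diag_mx (\row_k ((Num.sqrt (p k))%:C)%C).

Lemma schmidtE d (M : 'M[C]_d) p : has_sq_schmidt M p ->
  exists U V : 'M[C]_d, unitary U /\ unitary V /\ M = U *m dg p *m V^T.
Proof.
move=> [U [V [HU [HV ->]]]]; exists U, V; do 2 split => //.
apply/matrixP=> i j; rewrite /dg mul_mx_diag summxE !mxE; apply: eq_bigr=> k _.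
rewrite !mxE big_ord1 !mxE.
by rewrite mulrCA mulrA.
Qed.


Lemma conjR (x : R) : (((x%:C)%C)^* : C) = (x%:C)%C.
Proof. exact: conjc_real. Qed.

Lemma gram m (U V : 'M[C]_m) (D : 'M[C]_m) : unitary V ->
  (U *m D *m V^T) *m adjmx (U *m D *m V^T) = U *m (D *m adjmx D) *m adjmx U.
Proof.
move=> HV; rewrite !adjmx_mul adjmx_tr !mulmxA.
by rewrite -[U *m D *m V^T *m (adjmx V)^T]mulmxA unitary_trT // mulmx1.
Qed.

Lemma dg_adj d (p : 'I_d -> R) : (forall k, 0 <= p k) ->
  dg p *m adjmx (dg p) = diag_mx (\row_k ((p k)%:C)%C).
Proof.
move=> hp; rewrite /dg mul_diag_mx; apply/matrixP=> i j; rewrite !mxE.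
case: (eqVneq i j) => [<-|nij]; last by rewrite !mulr0n rmorph0 mulr0.
rewrite !mulr1n conjR -rmorphM /=.
by rewrite -expr2 sqr_sqrtr.
Qed.

Lemma lu_spec d (M N : 'M[C]_d) p q : (forall k, 0 <= p k) -> (forall k, 0 <= q k) ->
  has_sq_schmidt M p -> has_sq_schmidt N q -> lu_transformable M N ->
  forall j, exists i, q i = p j.
Proof.
move=> hp hq /schmidtE [U [V [HU [HV EM]]]] /schmidtE [U' [V' [HU' [HV' EN]]]].
move=> [UA [UB [HA [HB EL]]]] j.
have G1 : N *m adjmx N = U' *m diag_mx (\row_k ((q k)%:C)%C) *m adjmx U'.
  by rewrite EN (@gram _ U' V' (dg q) HV') dg_adj.
have G2 : N *m adjmx N = UA *m (U *m diag_mx (\row_k ((p k)%:C)%C) *m adjmx U) *m adjmx UA.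
  by rewrite -EL /lu_apply (@gram _ UA UB M HB) EM (@gram _ U V (dg p) HV) dg_adj.
set W := adjmx U' *m UA *m U.
have HW : unitary W by apply: unitary_mul => //; apply: unitary_mul => //; apply: unitary_adj.
set Dq := diag_mx _ in G1. set Dp := diag_mx _ in G2.
have E : Dq = W *m Dp *m adjmx W.
  have -> : Dq = adjmx U' *m (N *m adjmx N) *m U'.
    by rewrite G1 !mulmxA (proj2 HU') mul1mx -mulmxA (proj2 HU') mulmx1.
  by rewrite G2 /W !adjmx_mul !adjmxK !mulmxA.
have E2 : Dq *m W = W *m Dp by rewrite E -mulmxA (proj2 HW) mulmx1.
have : (adjmx W *m W) j j = 1 by rewrite (proj2 HW) mxE eqxx.
rewrite mxE => S1.
have [i Wi] : exists i, W i j != 0.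
  apply/existsP; apply: contraT; rewrite negb_exists => /forallP H0.
  move: S1; rewrite big1 => [/eqP|i _]; first by rewrite eq_sym oner_eq0.
  by move: (H0 i); rewrite negbK => /eqP ->; rewrite mulr0.
exists i.
clearbody W; move/matrixP/(_ i j): E2; rewrite /Dq /Dp mul_diag_mx mul_mx_diag !mxE => H.
apply: complexI; apply: (mulIf Wi); by rewrite H mulrC.
Qed.


Lemma adjmx_tens m n p q (A : 'M[C]_(m, n)) (B : 'M[C]_(p, q)) :
  adjmx (A *t B) = adjmx A *t adjmx B.
Proof. by apply/matrixP=> i j; rewrite !mxE rmorphM. Qed.

Lemma tens1 m n : (1%:M : 'M[C]_m) *t (1%:M : 'M[C]_n) = 1%:M.
Proof.
apply/matrixP=> i j.
case: (mxtens_indexP i) => i1 i2; case: (mxtens_indexP j) => j1 j2.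
rewrite tensmxE !mxE (inj_eq (can_inj (@mxtens_indexK m n))) xpair_eqE.
by rewrite -natrM mulnb.
Qed.

Lemma unitary_tens m n (A : 'M[C]_m) (B : 'M[C]_n) :
  unitary A -> unitary B -> unitary (A *t B).
Proof.
move=> [A1 A2] [B1 B2]; rewrite /unitary adjmx_tens !tensmx_mul.
by rewrite A1 A2 B1 B2 tens1.
Qed.

Lemma unitary_perm n (s : 'S_n) : unitary (perm_mx s : 'M[C]_n).
Proof.
have E : adjmx (perm_mx s : 'M[C]_n) = (perm_mx s)^T.
  by apply/matrixP=> i j; rewrite !mxE rmorph_nat.
by rewrite /unitary E tr_perm_mx -!perm_mxM mulgV mulVg perm_mx1.
Qed.

Lemma lu_perm n (M N A B A' B' D : 'M[C]_n) (s : 'S_n) :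
  unitary A -> unitary B -> unitary A' -> unitary B' ->
  M = A *m D *m B^T ->
  N = A' *m (perm_mx s *m D *m (perm_mx s)^T) *m B'^T ->
  lu_transformable M N.
Proof.
move=> HA HB HA' HB' -> ->.
exists (A' *m perm_mx s *m adjmx A), (B' *m perm_mx s *m adjmx B).
split; first by apply: unitary_mul; [apply: unitary_mul => //; apply: unitary_perm | apply: unitary_adj].
split; first by apply: unitary_mul; [apply: unitary_mul => //; apply: unitary_perm | apply: unitary_adj].
rewrite /lu_apply !trmx_mul !mulmxA.
rewrite -[A' *m perm_mx s *m adjmx A *m A]mulmxA (proj2 HA) mulmx1.
by rewrite -[A' *m perm_mx s *m D *m B^T *m (adjmx B)^T]mulmxA unitary_trT // mulmx1.
Qed.

Lemma tens_dg m n (p : 'I_m -> R) (q : 'I_n -> R) x y :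
  (forall k, 0 <= p k) ->
  (dg p *t dg q) x y =
  (x == y)%:R * ((Num.sqrt (p (mxtens_unindex x).1 * q (mxtens_unindex x).2))%:C)%C.
Proof.
move=> hp; rewrite /dg !mxE.
rewrite -(inj_eq (can_inj (@mxtens_unindexK m n))).
case: (mxtens_unindex x) => x1 x2; case: (mxtens_unindex y) => y1 y2 /=.
rewrite xpair_eqE sqrtrM // rmorphM.
case: (eqVneq x1 y1) => _; case: (eqVneq x2 y2) => _ /=;
  by rewrite ?mulr1n ?mulr0n ?mul1r ?mul0r ?mulr0.
Qed.

Lemma geomprod m n (b : R) :
  (\sum_(i < m) (b ^+ n) ^+ i) * (\sum_(j < n) b ^+ j) = \sum_(k < m * n) b ^+ k.
Proof.
rewrite mulr_sum; apply: eq_bigr => k _.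
have hk : ((mxtens_unindex k).1 * n + (mxtens_unindex k).2)%N = k :=
  congr1 val (mxtens_unindexK k).
by rewrite -exprM -exprD [(n * _)%N]mulnC hk.
Qed.

End Aux.

Lemma sbound m n (i : 'I_m) (j : 'I_n) : (i + m * j < m * n)%N.
Proof. have := ltn_ord i; have := ltn_ord j; nia. Qed.

Definition sfun m n (x : 'I_(m * n)) : 'I_(m * n) :=
  Ordinal (sbound (mxtens_unindex x).1 (mxtens_unindex x).2).

Lemma sfun_inj m n : injective (@sfun m n).
Proof.
move=> x y; rewrite -[x]mxtens_unindexK -[y]mxtens_unindexK /sfun !mxtens_indexK.
case: (mxtens_unindex x) => x1 x2; case: (mxtens_unindex y) => y1 y2.
move/(congr1 val) => /= H.
have : (x2 * m + x1 == y2 * m + y1)%N.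
  apply/eqP; rewrite (mulnC x2) (mulnC y2) (addnC _ x1) (addnC _ y1). exact: H.
rewrite eq_addl_mul // xpair_eqE => /andP [/eqP e2 /eqP e1].
by apply: val_inj => /=; rewrite (val_inj e1) (val_inj e2).
Qed.

Lemma permPP (C : Type) n (s : 'S_n) (X : 'M[C]_n) x y :
  (col_perm s (row_perm s X)) x y = X (s x) (s y).
Proof. by rewrite !mxE. Qed.

Lemma nn (R : rcfType) d (b : R) : 0 <= b -> forall k, 0 <= normalize (geom d b) k.
Proof.
move=> hb k; rewrite /normalize /geom divr_ge0 ?exprn_ge0 //.
by apply: sumr_ge0 => j _; rewrite exprn_ge0.
Qed.

Lemma geom_lt (R : rcfType) m dl (a : R) : (2 <= m)%N -> 0 < a -> a < 1 -> (1 < dl)%N ->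
  \sum_(k < m) (a ^+ dl) ^+ k < \sum_(k < m) a ^+ k.
Proof.
case: m => [|[|m]] // _ a0 a1 hdl.
rewrite !big_ord_recl /= !expr0 !expr1 ltrD2l.
have hl : a ^+ dl < a by rewrite ltr_iXnr.
apply: ltr_leD => //; apply: ler_sum => k _.
by apply: lerXn2r; rewrite ?nnegrE ?exprn_ge0 ?ltW.
Qed.

Lemma geom_pos (R : rcfType) m (b : R) : (0 < m)%N -> 0 <= b -> 0 < \sum_(k < m) b ^+ k.
Proof.
case: m => [|m] // _ hb; rewrite big_ord_recl /= expr0.
have : 0 <= \sum_(i < m) b ^+ (bump 0 i) by apply: sumr_ge0 => i _; rewrite exprn_ge0.
move=> h; lra.
Qed.

Unset Implicit Arguments.
Theorem mainTheorem9 (R : realType) (dmu dlam : nat) (a : R)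
  (Mmu Mmubar : 'M[R[i]]_dmu) (Mlam Mlambar : 'M[R[i]]_dlam) :
  (2 <= dmu)%N -> (2 <= dlam)%N -> (dmu < dlam)%N ->
  0 < a -> a < 1 ->
  has_sq_schmidt Mmu (normalize (geom dmu (a ^+ dlam))) ->
  has_sq_schmidt Mlam (normalize (geom dlam a)) ->
  has_sq_schmidt Mmubar (normalize (geom dmu a)) ->
  has_sq_schmidt Mlambar (normalize (geom dlam (a ^+ dmu))) ->
  lu_transformable (Mmu *t Mlam) (Mmubar *t Mlambar) /\
  ~ lu_transformable Mmu Mmubar.
Proof.
move=> h2m h2l hml a0 a1 S1 S2 S3 S4.
have a0' : 0 <= a by apply: ltW.
split.
  have [U1 [V1 [HU1 [HV1 E1]]]] := schmidtE S1.
  have [U2 [V2 [HU2 [HV2 E2]]]] := schmidtE S2.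
  have [U3 [V3 [HU3 [HV3 E3]]]] := schmidtE S3.
  have [U4 [V4 [HU4 [HV4 E4]]]] := schmidtE S4.
  pose s : 'S_(dmu * dlam) := perm (@sfun_inj dmu dlam).
  have key : perm_mx s *m (dg (normalize (geom dmu (a ^+ dlam))) *t dg (normalize (geom dlam a)))
      *m (perm_mx s)^T = dg (normalize (geom dmu a)) *t dg (normalize (geom dlam (a ^+ dmu))).
    rewrite tr_perm_mx -col_permE -row_permE; apply/matrixP => x y.
    rewrite permPP !permE !tens_dg; try by move=> k; apply: nn; rewrite ?exprn_ge0.
    rewrite (inj_eq (@sfun_inj dmu dlam)).
    suff -> : normalize (geom dmu (a ^+ dlam)) (mxtens_unindex (sfun x)).1 *
      normalize (geom dlam a) (mxtens_unindex (sfun x)).2 =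
      normalize (geom dmu a) (mxtens_unindex x).1 *
      normalize (geom dlam (a ^+ dmu)) (mxtens_unindex x).2 by [].
    rewrite /normalize /geom !mulf_div geomprod [(\sum_(i < dmu) a ^+ i) * _]mulrC geomprod.
    have Hs : \sum_(k < dlam * dmu) a ^+ k = \sum_(k < dmu * dlam) a ^+ k.
      by rewrite -!(big_mkord xpredT (fun k => a ^+ k)) mulnC.
    rewrite Hs; congr (_ / _).
    have hk := congr1 val (mxtens_unindexK (sfun x)); rewrite /= in hk.
    rewrite -!exprM -!exprD; congr (a ^+ _).
    by rewrite [(dlam * _)%N]mulnC hk.
  have := @lu_perm _ _ (Mmu *t Mlam) (Mmubar *t Mlambar) (U1 *t U2) (V1 *t V2) (U3 *t U4) (V3 *t V4)
    (dg (normalize (geom dmu (a ^+ dlam))) *t dg (normalize (geom dlam a))) s.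
  apply.
  - exact: unitary_tens.
  - exact: unitary_tens.
  - exact: unitary_tens.
  - exact: unitary_tens.
  - by rewrite E1 E2 trmx_tens !tensmx_mul.
  - by rewrite key E3 E4 trmx_tens !tensmx_mul.
move=> Hlu.
have j0 : (0 < dmu)%N by apply: leq_trans h2m.
have [i Hi] := lu_spec (nn (exprn_ge0 dlam a0')) (nn a0') S1 S3 Hlu (Ordinal j0).
move: Hi; rewrite /normalize /geom /= expr0.
have pa := geom_pos j0 a0'.
have pb := geom_pos j0 (exprn_ge0 dlam a0').
have lt := geom_lt h2m a0 a1 (leq_trans (isT : (1 < 2)%N) h2l).
move/eqP; rewrite (eqr_div _ _ (lt0r_neq0 pa) (lt0r_neq0 pb)) mul1r => /eqP H.
have hi : a ^+ i <= 1 by rewrite exprn_ile1 // ltW.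
set Sa := \sum_(k < dmu) a ^+ k in H pa lt.
set Sb := \sum_(k < dmu) (a ^+ dlam) ^+ k in H pb lt.
have : a ^+ i * Sb <= Sb by rewrite -[X in _ <= X]mul1r ler_wpM2r // ltW.
lra.
Qed.
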